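(* For any $m>8\pi$ there exist $\varepsilon>0$ and $\ell>0$ such that, with $\tau(t):=\varepsilon-\ell t$ and $a(t):=4e^{\tau(t)}$ for $t\in(0,\varepsilon/\ell)$, the function $$\underline M(\rho,t):=\frac{a(t)\rho}{\rho+\tau(t)^3},\qquad(\rho,t)\in[0,1]\times[0,\varepsilon/\ell),$$ satisfies $$\sup_{t\in(0,\varepsilon/\ell)}\underline M(1,t)<\frac{m}{2\pi},\qquad \inf_{\rho\in(0,1)}\underline M_\rho(\rho,t)>0\ \text{ for all }t\in[0,\varepsilon/\ell),$$ and $$\Theta\underline M\le0\quad\text{for all }\rho\in(0,1),\ t\in(0,\varepsilon/\ell).$$ In particular $\underline M(0,t)=0$ for all $t\in(0,\varepsilon/\ell)$, while $\underline M(\rho,t)\to4$ as $t\uparrow\varepsilon/\ell$ for every $\rho\in(0,1]$.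
   Context: For $T>0$ and $f\in C^{2,1}((0,1)\times(0,T))$ the operator $\Theta$ is defined by $$\Theta f:=f_t-4\rho f_{\rho\rho}-2f_\rho\Big(f-\frac{m\rho}{2\pi}\Big).$$ *)

(* Defs.v *)
From Stdlib Require Import Reals.
From Coquelicot Require Import Coquelicot.
Open Scope R_scope.

Definition tau (eps ell t : R) : R := eps - ell * t.
Definition acoef (eps ell t : R) : R := 4 * exp (tau eps ell t).
Definition Mlow (eps ell rho t : R) : R :=
  acoef eps ell t * rho / (rho + (tau eps ell t) ^ 3).

Definition d_t (f : R -> R -> R) (rho t : R) : R := Derive (fun s => f rho s) t.
Definition d_rho (f : R -> R -> R) (rho t : R) : R := Derive (fun r => f r t) rho.
Definition d_rhorho (f : R -> R -> R) (rho t : R) : R :=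
  Derive (fun r => Derive (fun r' => f r' t) r) rho.

Definition Theta (m : R) (f : R -> R -> R) (rho t : R) : R :=
  d_t f rho t - 4 * rho * d_rhorho f rho t
  - 2 * d_rho f rho t * (f rho t - m * rho / (2 * PI)).

(* Main.v *)
Require Import Defs.
From Stdlib Require Import Reals Lra.
From Coquelicot Require Import Coquelicot.
Open Scope R_scope.

Lemma drho_is (eps ell t r : R) : r + tau eps ell t ^ 3 <> 0 ->
  is_derive (fun r => Mlow eps ell r t) r
   (acoef eps ell t * tau eps ell t ^ 3 / (r + tau eps ell t ^ 3)^2).
Proof.
  intros H. unfold Mlow. set (a := acoef eps ell t). set (b := tau eps ell t ^ 3).
  auto_derive. exact H. field. exact H.
Qed.

Lemma dt_is (eps ell t r : R) : r + tau eps ell t ^ 3 <> 0 ->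
  is_derive (fun s => Mlow eps ell r s) t
   (- ell * acoef eps ell t * r / (r + tau eps ell t ^ 3)
    + 3 * ell * tau eps ell t ^ 2 * acoef eps ell t * r / (r + tau eps ell t ^ 3)^2).
Proof.
  intros H. unfold Mlow, acoef, tau in *.
  auto_derive. exact H. unfold Rminus. field. unfold Rminus in H. exact H.
Qed.

Lemma drhorho_is (eps ell t r : R) : 0 < tau eps ell t -> 0 < r ->
  is_derive (fun r => d_rho (Mlow eps ell) r t) r
   (- 2 * acoef eps ell t * tau eps ell t ^ 3 / (r + tau eps ell t ^ 3)^3).
Proof.
  intros Ht Hr.
  set (b := tau eps ell t ^ 3). assert (Hb : 0 < b) by (apply pow_lt; auto).
  apply (is_derive_ext_loc (fun r => acoef eps ell t * b / (r + b)^2)).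
  - assert (Hp : 0 < r + b) by lra.
    exists (mkposreal _ Hp). intros y Hy. simpl in Hy.
    unfold ball in Hy; simpl in Hy; unfold AbsRing_ball, abs, minus, plus, opp in Hy; simpl in Hy.
    apply Rabs_lt_between in Hy.
    unfold d_rho. symmetry. apply is_derive_unique. apply drho_is. fold b. lra.
  - assert (r + b <> 0) by lra. auto_derive. rewrite Rmult_1_r. apply Rmult_integral_contrapositive; auto. field. exact H.
Qed.

Lemma drho_eq (eps ell t r : R) : r + tau eps ell t ^ 3 <> 0 ->
  d_rho (Mlow eps ell) r t = acoef eps ell t * tau eps ell t ^ 3 / (r + tau eps ell t ^ 3)^2.
Proof. intros H. unfold d_rho. apply is_derive_unique. apply drho_is; auto. Qed.

Lemma dt_eq (eps ell t r : R) : r + tau eps ell t ^ 3 <> 0 ->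
  d_t (Mlow eps ell) r t = - ell * acoef eps ell t * r / (r + tau eps ell t ^ 3)
    + 3 * ell * tau eps ell t ^ 2 * acoef eps ell t * r / (r + tau eps ell t ^ 3)^2.
Proof. intros H. unfold d_t. apply is_derive_unique. apply dt_is; auto. Qed.

Lemma drhorho_eq (eps ell t r : R) : 0 < tau eps ell t -> 0 < r ->
  d_rhorho (Mlow eps ell) r t = - 2 * acoef eps ell t * tau eps ell t ^ 3 / (r + tau eps ell t ^ 3)^3.
Proof. intros H H'. unfold d_rhorho. apply is_derive_unique. apply (drhorho_is eps ell t r H H'). Qed.

Theorem lemma2p1 :
  forall m : R, m > 8 * PI ->
  exists eps ell : R, 0 < eps /\ 0 < ell /\
    (* sup_{t in (0, eps/ell)} M(1,t) < m/(2 pi) *)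
    (exists c : R, c < m / (2 * PI) /\
       forall t, 0 < t < eps / ell -> Mlow eps ell 1 t <= c) /\
    (* inf_{rho in (0,1)} M_rho(rho,t) > 0 for every t in [0, eps/ell) *)
    (forall t, 0 <= t < eps / ell ->
       exists c : R, 0 < c /\
         forall rho, 0 < rho < 1 -> c <= d_rho (Mlow eps ell) rho t) /\
    (* Theta M <= 0 on (0,1) x (0, eps/ell) *)
    (forall rho t, 0 < rho < 1 -> 0 < t < eps / ell ->
       Theta m (Mlow eps ell) rho t <= 0) /\
    (* M(0,t) = 0 *)
    (forall t, 0 < t < eps / ell -> Mlow eps ell 0 t = 0) /\
    (* M(rho,t) -> 4 as t increases to eps/ell, for rho in (0,1] *)
    (forall rho, 0 < rho <= 1 ->
       filterlim (fun t => Mlow eps ell rho t) (at_left (eps / ell)) (locally 4)).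
Proof.
intros m Hm.
  assert (HPI := PI_RGT_0).
  assert (Hm0 : 0 < m) by lra.
  assert (Hr : 1 < m / (8 * PI)).
  { apply Rmult_lt_reg_r with (8 * PI); [lra|]. unfold Rdiv. rewrite Rmult_assoc, Rinv_l by lra. lra. }
  assert (Hln : 0 < ln (m / (8 * PI))).
  { rewrite <- ln_1. apply ln_increasing; lra. }
  set (eps := Rmin (PI / m) (ln (m / (8 * PI)) / 2)).
  assert (He0 : 0 < eps).
  { unfold eps. apply Rmin_case; [apply Rdiv_lt_0_compat|]; lra. }
  assert (He1 : eps <= PI / m) by apply Rmin_l.
  assert (He2 : eps <= ln (m / (8 * PI)) / 2) by apply Rmin_r.
  assert (Hexp : exp eps < m / (8 * PI)).
  { apply Rlt_le_trans with (exp (ln (m / (8 * PI)))); [apply exp_increasing; lra| rewrite exp_ln by lra; lra]. }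
  assert (Hq : (m / PI) * eps <= 1).
  { apply Rle_trans with ((m / PI) * (PI / m)).
    - apply Rmult_le_compat_l; [apply Rlt_le, Rdiv_lt_0_compat; lra| exact He1].
    - right. field. lra. }
  assert (Hd1 : eps / 1 = eps) by field.
  exists eps, 1. rewrite Hd1.
  split; [exact He0|]. split; [lra|].
  split.
  { exists (4 * exp eps). split.
    - apply Rlt_le_trans with (4 * (m / (8 * PI))); [lra|]. right. field. lra.
    - intros t Ht. unfold Mlow, acoef. set (tt := tau eps 1 t).
      assert (Htt : 0 < tt < eps) by (unfold tt, tau; lra).
      assert (Hb : 0 < tt ^ 3) by (apply pow_lt; lra).
      assert (HA : exp tt <= exp eps) by (apply Rlt_le, exp_increasing; lra).
      assert (HA0 : 0 < exp tt) by apply exp_pos.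
      apply Rle_trans with (4 * exp tt); [|lra].
      apply Rmult_le_reg_r with (1 + tt ^ 3); [lra|]. unfold Rdiv.
      rewrite Rmult_assoc, Rinv_l by lra. nra. }
  split.
  { intros t Ht. set (tt := tau eps 1 t).
    assert (Htt : 0 < tt <= eps) by (unfold tt, tau; lra).
    set (b := tt ^ 3). assert (Hb : 0 < b) by (apply pow_lt; lra).
    set (a := acoef eps 1 t). assert (Ha : 0 < a) by (unfold a, acoef; generalize (exp_pos (tau eps 1 t)); lra).
    exists (a * b / (1 + b) ^ 2). split.
    - apply Rdiv_lt_0_compat; [nra| apply pow_lt; lra].
    - intros rho Hrho. rewrite (drho_eq eps 1 t rho ltac:(fold tt b; lra)).
      fold tt b a. unfold Rdiv. apply Rmult_le_compat_l; [nra|].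
      apply Rinv_le_contravar; [apply pow_lt; lra|]. simpl. nra. }
  split.
  { intros rho t Hrho Ht. set (tt := tau eps 1 t).
    assert (Htt : 0 < tt < eps) by (unfold tt, tau; lra).
    set (b := tt ^ 3). assert (Hb : 0 < b) by (apply pow_lt; lra).
    set (A := exp tt). assert (HA : 1 + tt < A) by (apply exp_ineq1; lra).
    assert (Hx : 0 < rho + b) by lra.
    unfold Theta.
    rewrite (dt_eq eps 1 t rho ltac:(fold tt b; lra)).
    rewrite (drhorho_eq eps 1 t rho ltac:(fold tt; lra) ltac:(lra)).
    rewrite (drho_eq eps 1 t rho ltac:(fold tt b; lra)).
    unfold Mlow, acoef. fold tt b A.
    set (x := rho + b). set (q := m / PI).
    assert (Hqt : q * tt <= 1).
    { apply Rle_trans with (q * eps); [|exact Hq]. apply Rmult_le_compat_l; [unfold q; apply Rlt_le, Rdiv_lt_0_compat; lra| lra]. }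
    assert (Heq : - (1) * (4 * A) * rho / x + 3 * 1 * tt ^ 2 * (4 * A) * rho / x ^ 2 -
      4 * rho * (- 2 * (4 * A) * b / x ^ 3) -
      2 * (4 * A * b / x ^ 2) * (4 * A * rho / x - m * rho / (2 * PI))
      = (4 * A * rho / x ^ 3) * (- x ^ 2 + 3 * tt ^ 2 * x + 8 * b - 2 * (4 * A) * b + q * b * x)).
    { unfold q. field. unfold x; split; lra. }
    rewrite Heq.
    assert (HP : - x ^ 2 + 3 * tt ^ 2 * x + 8 * b - 2 * (4 * A) * b + q * b * x <= 0).
    { assert (H1 : q * b * x <= tt ^ 2 * x).
      { unfold b. replace (q * tt ^ 3 * x) with ((q * tt) * (tt ^ 2 * x)) by ring.
        assert (0 < tt ^ 2 * x) by (apply Rmult_lt_0_compat; [apply pow_lt|unfold x]; lra). nra. }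
      assert (H2 : 8 * b - 2 * (4 * A) * b <= - 8 * tt ^ 4).
      { unfold b. replace (8 * tt ^ 3 - 2 * (4 * A) * tt ^ 3) with (- 8 * tt ^ 3 * (A - 1)) by ring.
        replace (- 8 * tt ^ 4) with (- 8 * tt ^ 3 * tt) by ring.
        assert (0 < tt ^ 3) by (apply pow_lt; lra). nra. }
      assert (H3 : 0 <= (x - 2 * tt ^ 2) ^ 2) by apply pow2_ge_0.
      assert (H4 : 0 <= tt ^ 4) by (apply pow_le; lra).
      nra. }
    assert (0 < 4 * A * rho / x ^ 3).
    { apply Rdiv_lt_0_compat; [|apply pow_lt; unfold x; lra]. assert (0 < A) by (unfold A; apply exp_pos). nra. }
    nra. }
  split.
  { intros t Ht. unfold Mlow. unfold Rdiv. ring. }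
  intros rho Hrho.
  apply (filterlim_filter_le_1 _ (filter_le_within _)).
  replace 4 with (Mlow eps 1 rho eps).
  - apply (ex_derive_continuous (K:=R_AbsRing) (V:=R_NormedModule) (fun t => Mlow eps 1 rho t)). eexists. apply dt_is. unfold tau. simpl. lra.
  - unfold Mlow, acoef, tau. replace (eps - 1 * eps) with 0 by ring. rewrite exp_0. simpl. field. lra.
Qed.
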